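(* The set of functions $\{\sigma_\omega\}_{\omega\in S}$ is linearly independent as a set of real-valued functions on the set of all Seifert matrices. That is, if $\omega_1,\dots,\omega_N\in S$ are distinct and $c_1,\dots,c_N\in\mathbb{R}$ satisfy $\sum_{i=1}^N c_i\,\sigma_{\omega_i}(V)=0$ for every Seifert matrix $V$, then $c_1=\dots=c_N=0$.
   Context: A Seifert matrix is a square integral matrix $V$ with $\det(V-V^T)=\pm1$ (such a matrix necessarily has even size). For a unit complex number $\omega$, the hermitianized Seifert form is $V_\omega=(1-\omega)V+(1-\bar\omega)V^T$ (a Hermitian matrix), and $\sigma_\omega(V)$ denotes its signature. $S$ denotes the set of unit complex numbers with positive imaginary part. *)

(* Defs.v *)
From mathcomp Require Import all_boot all_order all_algebra.
From mathcomp.real_closed Require Import complex.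
From mathcomp Require Import reals.
Set Implicit Arguments.
Unset Strict Implicit.
Unset Printing Implicit Defensive.
Import Order.TTheory GRing.Theory Num.Theory.
Local Open Scope ring_scope.

Definition seifert (n : nat) (V : 'M[int]_n) : Prop :=
  \det (V - V^T) = 1 \/ \det (V - V^T) = -1.

(* The eigenvalues (with multiplicity) of a square matrix over an algebraically
   closed field: the roots of its (monic) characteristic polynomial. *)
Definition eigenvalues (C : numClosedFieldType) (n : nat) (A : 'M[C]_n) : seq C :=
  sval (closed_field_poly_normal (char_poly A)).

Definition signature (C : numClosedFieldType) (n : nat) (A : 'M[C]_n) : int :=
  (count (fun x => 0 < x) (eigenvalues A))%:Z - (count (fun x => x < 0) (eigenvalues A))%:Z.

Definition herm_seifert (R : realType) (w : R[i]) (n : nat) (V : 'M[int]_n) : 'M[R[i]]_n :=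
  let VC := map_mx (fun z : int => z%:~R : R[i]) V in
  (1 - w) *: VC + (1 - w^*) *: VC^T.

Definition sigma_w (R : realType) (w : R[i]) (n : nat) (V : 'M[int]_n) : int :=
  signature (herm_seifert w V).

Definition in_S (R : realType) (w : R[i]) : Prop := `|w| = 1 /\ 0 < 'Im w.

(* Main.v *)
Require Import Defs.
From mathcomp Require Import all_boot all_order all_algebra.
From mathcomp.real_closed Require Import complex.
From mathcomp Require Import reals.
From mathcomp Require Import ring lra.
Import Order.TTheory GRing.Theory Num.Theory.
Set Implicit Arguments.
Unset Strict Implicit.
Unset Printing Implicit Defensive.
Local Open Scope complex_scope.
Local Open Scope ring_scope.

Definition Amx (k m : nat) : 'M[int]_2 :=
  \matrix_(i, j) (if ((i : nat) == 0%N) && ((j : nat) == 0%N) then 0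
                  else if ((i : nat) == 1%N) && ((j : nat) == 1%N) then - (k * m)%:Z
                  else k%:Z).
Definition Vmx (k m : nat) : 'M[int]_(2 + 2) := block_mx (Amx k m) 1 0 1.

Lemma Amx_sym k m : (Amx k m)^T = Amx k m.
Proof.
apply/matrixP => i j; rewrite !mxE.
by case: i => [[|[|//]] ?]; case: j => [[|[|//]] ?].
Qed.

Lemma Vmx_seifert k m : seifert (Vmx k m).
Proof.
rewrite /seifert /Vmx tr_block_mx Amx_sym trmx1 trmx0 opp_block_mx add_block_mx.
have -> : block_mx (Amx k m - Amx k m) (1 - 0) (0 - 1) (1 - 1) = 
          block_mx 0 1 (-1) 0 :> 'M[int]_(2+2).
  by rewrite subrr subr0 sub0r subrr.
set M := block_mx _ _ _ _.
have : M *m M = (-1) *: 1.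
  rewrite /M mulmx_block !mulmx0 !mul0mx !mulmx1 !mul1mx !add0r addr0.
  by rewrite scalemx1 (scalar_mx_block 2 2 (-1)) raddfN.
move/(congr1 determinant); rewrite det_mulmx detZ det1 => /eqP.
rewrite -expr2 mulr1 -signr_odd /= expr0 sqrf_eq1 => /orP[] /eqP ->; by [left|right].
Qed.

Section C.
Variable R : realType.
Local Notation C := (R[i]).

Definition AC k m : 'M[C]_2 := map_mx (fun z : int => z%:~R : C) (Amx k m).

Lemma herm_block (w : C) k m :
  herm_seifert w (Vmx k m) =
  block_mx (((1 - w) + (1 - w^*)) *: AC k m) (1 - w)%:M (1 - w^*)%:M ((1 - w) + (1 - w^*))%:M.
Proof.
rewrite /herm_seifert /Vmx map_block_mx map_mx1 map_mx0 tr_block_mx.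
rewrite trmx1 trmx0 !scale_block_mx add_block_mx.
have -> : (map_mx (fun z : int => z%:~R : C) (Amx k m))^T = AC k m.
  by rewrite map_trmx Amx_sym.
rewrite -/(AC k m) !scaler0 addr0 add0r !scalemx1.
rewrite -scalerDl; congr block_mx; apply/matrixP => i j; rewrite !mxE; case: eqP => _; rewrite ?mulr1n ?mulr0n ?addr0; reflexivity.
Qed.
End C.

Lemma det_block_sc (D : idomainType) n (P : 'M[D]_n) (q r s : D) : s != 0 ->
  \det (block_mx P q%:M r%:M s%:M : 'M_(n + n)) = \det (s *: P - (q * r)%:M).
Proof.
move=> s0.
have E : block_mx P q%:M r%:M s%:M *m block_mx s%:M 0 (- r%:M) 1 =
         block_mx (s *: P - (q * r)%:M) q%:M 0 s%:M :> 'M_(n + n).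
  rewrite mulmx_block; congr block_mx.
  - by rewrite mul_mx_scalar mulmxN mul_scalar_mx scale_scalar_mx.
  - by rewrite mulmx0 add0r mulmx1.
  - by rewrite mulmxN !mul_scalar_mx !scale_scalar_mx mulrC subrr.
  - by rewrite mulmx0 add0r mulmx1.
have := congr1 determinant E.
rewrite det_mulmx det_lblock det_ublock det1 mulr1 det_scalar.
exact: (mulIf (expf_neq0 _ s0)).
Qed.

Lemma det2 (D : comPzRingType) (M : 'M[D]_2) :
  \det M = M 0 0 * M 1 1 - M 0 1 * M 1 0.
Proof.
rewrite (expand_det_row _ 0) !big_ord_recl big_ord0 addr0 /cofactor.
rewrite !det_mx11 !mxE /= expr0 expr1 mul1r mulN1r mulrN.
by congr (_ * M _ _ - _ * M _ _); try congr (M _ _); apply: val_inj.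
Qed.

Lemma sub0_sc (D : pzRingType) n (x : D) : (0 : 'M_n) - x%:M = (- x)%:M.
Proof. by rewrite sub0r raddfN. Qed.
Lemma subsc (D : pzRingType) n (x y : D) : (x%:M : 'M_n) - y%:M = (x - y)%:M.
Proof. by rewrite raddfB. Qed.

Section C2.
Variable R : realType.
Local Notation C := (R[i]).

Lemma char_herm (w : C) k m :
  let tau := 1 - w + (1 - w^*) in
  let p := (1 - w) * (1 - w^*) in
  let s := 'X - tau%:P in
  char_poly (herm_seifert w (Vmx k m)) =
  (s * 'X - p%:P) * (s * 'X - p%:P + (tau * (k * m)%:R)%:P * s)
   - (tau * k%:R)%:P ^+ 2 * s ^+ 2.
Proof.
move=> tau p s.
rewrite herm_block /char_poly /char_poly_mx map_block_mx (scalar_mx_block 2 2).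
rewrite !map_scalar_mx opp_block_mx add_block_mx !sub0_sc subsc.
rewrite det_block_sc ?polyXsubC_eq0 // det2 !mxE /= ?mulr1n ?mulr0n ?rmorphN ?pmulrn.
rewrite /s /p /tau; ring.
Qed.

Lemma ltC0 (x : R) : (0 < x%:C) = (0 < x).
Proof. by rewrite ltcE /= eqxx. Qed.
Lemma ltC0' (x : R) : (x%:C < 0) = (x < 0).
Proof. by rewrite ltcE /= eqxx. Qed.

Lemma inS_facts (w : C) : in_S w ->
  (complex.Re w)^+2 + (complex.Im w)^+2 = 1 /\ 0 < complex.Im w.
Proof.
case=> hn; rewrite -complexIm ltC0 => hi; split => //.
by have := add_Re2_Im2 w; rewrite hn expr1n => /(congr1 (@complex.Re R)).
Qed.

Lemma tau_eq (w : C) : 1 - w + (1 - w^*) = (2 - 2 * complex.Re w)%:C.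
Proof.
case: w => a b /=; apply/eqP; rewrite eq_complex /=.
by apply/andP; split; apply/eqP; ring.
Qed.

Lemma p_eq (w : C) : (complex.Re w)^+2 + (complex.Im w)^+2 = 1 ->
  (1 - w) * (1 - w^*) = (2 - 2 * complex.Re w)%:C.
Proof.
case: w => a b /= h; apply/eqP; rewrite eq_complex /=.
apply/andP; split; apply/eqP; last by ring.
by transitivity (1 - 2 * a + (a ^+ 2 + b ^+ 2)); [ring | rewrite h; ring].
Qed.

Lemma eig_perm n (A : 'M[C]_n) (L : seq C) :
  char_poly A = \prod_(z <- L) ('X - z%:P) -> perm_eq (eigenvalues A) L.
Proof.
rewrite /eigenvalues; case: closed_field_poly_normal => r /= Hr HL.
rewrite (monicP (char_poly_monic A)) scale1r in Hr.
by apply: prod_XsubC_eq; rewrite -Hr.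
Qed.

Lemma quad_roots (S P : R) : 0 <= S ^+ 2 - 4%:R * P ->
  exists x y, [/\ x + y = S, x * y = P & y <= x].
Proof.
move=> hD; set d := Num.sqrt (S ^+ 2 - 4%:R * P).
have hd : d ^+ 2 = S ^+ 2 - 4%:R * P by rewrite sqr_sqrtr.
have hd0 : 0 <= d by rewrite sqrtr_ge0.
exists ((S + d) / 2%:R), ((S - d) / 2%:R); split.
- by field.
- by transitivity ((S ^+ 2 - d ^+ 2) / 4%:R); [field | rewrite hd; field].
- by rewrite ler_pM2r ?invr_gt0 ?ltr0n //; lra.
Qed.

Lemma quadXP (x y S P : R) : x + y = S -> x * y = P ->
  ('X - (x%:C)%:P) * ('X - (y%:C)%:P) = 'X^2 - ((S%:C)%:P) * 'X + (P%:C)%:P :> {poly C}.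
Proof. move=> <- <-; ring. Qed.

Lemma sgn_neg (x y : R) : y <= x -> x * y < 0 -> 0 < x /\ y < 0.
Proof. move=> h1 h2; split; nra. Qed.

Lemma sgn_pos (x y : R) : 0 < x * y -> 0 < x + y -> 0 < x /\ 0 < y.
Proof. move=> h1 h2; split; nra. Qed.

Lemma disc_ge0 (t a : R) : 0 < t -> 0 <= (t * (1 + a)) ^+ 2 - 4%:R * (t * (a * t - 1)).
Proof.
move=> ht; have -> : (t * (1 + a)) ^+ 2 - 4%:R * (t * (a * t - 1)) = (t * (1 - a)) ^+ 2 + 4%:R * t by ring.
by rewrite addr_ge0 ?sqr_ge0 // mulr_ge0 // ltW.
Qed.

Lemma sig_V (w : C) (k m : nat) (rho : R) : in_S w -> 0 < rho ->
  rho ^+ 2 + m%:R * rho = 1 -> (0 < k)%N ->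
  k%:R * rho * (2 - 2 * complex.Re w) != 1 ->
  sigma_w w (Vmx k m) = if 1 < k%:R * rho * (2 - 2 * complex.Re w) then 2 else 0.
Proof.
move=> hS hr hrho hk.
have [h1 hb] := inS_facts hS.
set t := 2 - 2 * complex.Re w.
have ht : 0 < t by rewrite /t; nra.
set a1 := k%:R * rho; set a2 := - (k%:R * (m%:R + rho)).
have hs : a1 + a2 = - (k * m)%:R by rewrite /a1 /a2 natrM; ring.
have hp : a1 * a2 = - (k%:R ^+ 2).
  by transitivity (- (k%:R ^+ 2 * (rho ^+ 2 + m%:R * rho))); [rewrite /a1 /a2; ring | rewrite hrho mulr1].
have [x1 [y1 [sx1 px1 le1]]] := quad_roots (disc_ge0 a1 ht).
have [x2 [y2 [sx2 px2 le2]]] := quad_roots (disc_ge0 a2 ht).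
have Hchar : char_poly (herm_seifert w (Vmx k m)) =
    \prod_(z <- [:: x1%:C; y1%:C; x2%:C; y2%:C]) ('X - z%:P).
  rewrite char_herm tau_eq p_eq // -/t !big_cons big_nil mulr1.
  transitivity ((('X - (x1%:C)%:P) * ('X - (y1%:C)%:P)) *
                (('X - (x2%:C)%:P) * ('X - (y2%:C)%:P))); last by ring.
  rewrite (quadXP sx1 px1) (quadXP sx2 px2).
  set u := ('X - (t%:C)%:P) * 'X - (t%:C)%:P.
  set v := (t%:C)%:P * ('X - (t%:C)%:P).
  transitivity (u ^+ 2 - ((a1 + a2)%:C)%:P * u * v + ((a1 * a2)%:C)%:P * v ^+ 2); last first.
    by rewrite /u /v; ring.
  rewrite hs hp /u /v; ring.
rewrite /sigma_w /signature !(permP (eig_perm Hchar)) /= !ltC0 !ltC0'.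
have [hx2 hy2] : 0 < x2 /\ y2 < 0.
  apply: sgn_neg => //; rewrite px2 pmulr_rlt0 //.
  have hk' : 0 < k%:R :> R by rewrite ltr0n.
  have hm : 0 <= m%:R :> R by rewrite ler0n.
  have : a2 < 0 by rewrite /a2; nra.
  nra.
rewrite hx2 hy2 (lt_gtF hx2) (lt_gtF hy2) /= => hne.
case: (ltgtP 1 (a1 * t)) hne => // hc _.
- have [hx1 hy1] : 0 < x1 /\ 0 < y1.
    apply: sgn_pos; first by rewrite px1 mulr_gt0 // subr_gt0.
    rewrite sx1 mulr_gt0 //; have : 0 < a1 by rewrite /a1 mulr_gt0 ?ltr0n.
    lra.
  by rewrite hx1 hy1 (lt_gtF hx1) (lt_gtF hy1).
- have [hx1 hy1] : 0 < x1 /\ y1 < 0.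
    by apply: sgn_neg => //; rewrite px1 pmulr_rlt0 // subr_lt0.
  by rewrite hx1 hy1 (lt_gtF hx1) (lt_gtF hy1).
Qed.

Lemma density (lo hi : R) : 0 < lo -> lo < hi ->
  exists k m : nat, exists rho : R,
    [/\ (0 < k)%N, 0 < rho, rho ^+ 2 + m%:R * rho = 1 & lo < k%:R * rho < hi].
Proof.
move=> hlo hlh.
set m := Num.Def.archi_bound ((hi - lo)^-1).
have hm : (hi - lo)^-1 < m%:R by apply: archi_boundP; rewrite invr_ge0 subr_ge0 ltW.
have hm' : 1 < m%:R * (hi - lo).
  have hp : 0 < hi - lo by rewrite subr_gt0.
  by rewrite -(ltr_pM2r hp) mulVf ?gt_eqF in hm.
set d := Num.sqrt (m%:R ^+ 2 + 4%:R : R).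
have hd : d ^+ 2 = m%:R ^+ 2 + 4%:R by rewrite sqr_sqrtr // addr_ge0 ?sqr_ge0 ?ler0n.
have hd0 : 0 <= d by rewrite sqrtr_ge0.
have hm0 : 0 <= m%:R :> R by rewrite ler0n.
set rho := (d - m%:R) / 2%:R.
have hrho : rho ^+ 2 + m%:R * rho = 1.
  by transitivity ((d ^+ 2 - m%:R ^+ 2) / 4%:R); [rewrite /rho; field | rewrite hd; field].
have hr : 0 < rho.
  rewrite /rho divr_gt0 ?ltr0n // subr_gt0; nra.
have hmr : m%:R * rho < 1 by nra.
have hrs : rho < hi - lo by nra.
exists (Num.Def.trunc (lo / rho)).+1, m, rho; split => //.
have h1 := truncnS_gt (lo / rho).
have h2 : (Num.Def.trunc (lo / rho))%:R <= lo / rho.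
  by rewrite truncn_le divr_ge0 // ltW.
have e : lo / rho * rho = lo by rewrite mulfVK // gt_eqF.
apply/andP; split.
- by rewrite -(ltr_pM2r hr) e in h1.
- rewrite -(ler_pM2r hr) e in h2.
  by rewrite -addn1 natrD mulrDl mul1r; lra.
Qed.

Lemma exists_delta (s : seq R) : all (fun x => 0 < x) s ->
  exists d, 0 < d /\ all (fun x => d <= x) s.
Proof.
elim: s => [|x s IH] /=; first by exists 1.
case/andP => hx /IH [d [hd hs]]; exists (Num.min x d); split.
  by rewrite lt_min hx hd.
rewrite ge_min lexx /=; apply/allP => z hz; rewrite ge_min (allP hs z hz) orbT //.
Qed.

Lemma side (yk Tk yj d b : R) : 0 < Tk -> yk * Tk = 1 -> 0 < d ->
  d <= `|yk - yj| -> `|b - yj| < d / 2%:R ->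
  ((1 < b * Tk) = (yk < yj)) /\ (b * Tk != 1).
Proof.
move=> hT hy hd; rewrite ler_normr ltr_norml => /orP[] h /andP[h1 h2].
- have hlt : b * Tk < 1 by nra.
  split; last by rewrite lt_eqF.
  by apply/idP/idP => H; lra.
- have hlt : 1 < b * Tk by nra.
  split; last by rewrite gt_eqF.
  by apply/idP/idP => H; lra.
Qed.

Lemma inS_eq (u v : C) : in_S u -> in_S v -> complex.Re u = complex.Re v -> u = v.
Proof.
move=> /inS_facts [h1 h2] /inS_facts [h3 h4].
case: u h1 h2 => a b; case: v h3 h4 => a' b' /= h3 h4 h1 h2 ea.
have eb : b = b' by apply/eqP; rewrite eq_le; apply/andP; split; nra.
by rewrite ea eb.
Qed.
End C2.

Unset Implicit Arguments.
Local Close Scope complex_scope.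
Local Open Scope ring_scope.

Theorem theorem1 (R : realType) (N : nat) (w : 'I_N -> R[i]) (c : 'I_N -> R) :
  (forall k, in_S (w k)) ->
  injective w ->
  (forall (n : nat) (V : 'M[int]_n), seifert V ->
     \sum_(k < N) c k * (sigma_w (w k) V)%:~R = 0) ->
  forall k, c k = 0.
Proof.
move=> hS hinj hsum j.
pose T k := 2 - 2 * complex.Re (w k).
have hT k : 0 < T k by have [h1 h2] := inS_facts (hS k); rewrite /T; nra.
pose y k := (T k)^-1.
have hyT k : y k * T k = 1 by rewrite mulVf // gt_eqF.
have hy k : 0 < y k by rewrite invr_gt0.
have yinj k : y k = y j -> k = j.
  move/invr_inj => e; apply: hinj; apply: inS_eq => //; rewrite /T in e; lra.
have hpos : all (fun x => 0 < x) (y j :: [seq `|y k - y j| | k <- enum 'I_N & k != j]).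
  rewrite /= hy /=; apply/allP => x /mapP [k]; rewrite mem_filter => /andP [hkj _] ->.
  rewrite normr_gt0 subr_eq0; apply/negP => /eqP /yinj ek.
  by rewrite ek eqxx in hkj.
have [d [hd hall]] := exists_delta hpos.
have hdj : d <= y j by move: hall => /= /andP [].
have hdk k : k != j -> d <= `|y k - y j|.
  move=> hkj; apply: (allP hall); rewrite inE; apply/orP; right.
  by apply/mapP; exists k => //; rewrite mem_filter hkj mem_enum.
have [k1 [m1 [r1 [hk1 hr1 hrr1 /andP [l1 u1]]]]] :=
  @density R (y j) (y j + d / 2%:R) (hy j) ltac:(lra).
have [k2 [m2 [r2 [hk2 hr2 hrr2 /andP [l2 u2]]]]] :=
  @density R (y j - d / 2%:R) (y j) ltac:(lra) ltac:(lra).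
pose b (al : R) k : int := if 1 < al * T k then 2 else 0.
have key : forall k0 m0 rho, (0 < k0)%N -> 0 < rho -> rho ^+ 2 + m0%:R * rho = 1 ->
    (forall k, k0%:R * rho * T k != 1) ->
    \sum_(k < N) c k * (b (k0%:R * rho) k)%:~R = 0.
  move=> k0 m0 rho hk0 hr hrr hne.
  rewrite -[RHS](hsum _ _ (Vmx_seifert k0 m0)); apply: eq_bigr => k _.
  by rewrite (@sig_V R (w k) k0 m0 rho) //; exact: hne.

set al1 := k1%:R * r1 in l1 u1 key *.
set al2 := k2%:R * r2 in l2 u2 key *.
have hs1 k : k != j -> ((1 < al1 * T k) = (y k < y j)) /\ (al1 * T k != 1).
  move=> hkj; apply: (side (hT k) (hyT k) hd (hdk k hkj)).
  rewrite ltr_norml; lra.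
have hs2 k : k != j -> ((1 < al2 * T k) = (y k < y j)) /\ (al2 * T k != 1).
  move=> hkj; apply: (side (hT k) (hyT k) hd (hdk k hkj)).
  rewrite ltr_norml; lra.
have hj1 : 1 < al1 * T j by have := hyT j; have := hT j; nra.
have hj2 : al2 * T j < 1 by have := hyT j; have := hT j; nra.
have S1 := key k1 m1 r1 hk1 hr1 hrr1.
have S2 := key k2 m2 r2 hk2 hr2 hrr2.
have ne1 k : al1 * T k != 1.
  by case: (eqVneq k j) => [->|hkj]; [rewrite gt_eqF | exact: (hs1 k hkj).2].
have ne2 k : al2 * T k != 1.
  by case: (eqVneq k j) => [->|hkj]; [rewrite lt_eqF | exact: (hs2 k hkj).2].
have {}S1 := S1 ne1; have {}S2 := S2 ne2.
have : \sum_(k < N) c k * ((b al1 k)%:~R - (b al2 k)%:~R) = 0.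
  by under eq_bigr do rewrite mulrBr; rewrite sumrB S1 S2 subr0.
rewrite (bigD1 j) //= big1 ?addr0 => [|k hkj]; last first.
  by rewrite /b (hs1 k hkj).1 (hs2 k hkj).1 subrr mulr0.
rewrite /b hj1 (lt_gtF hj2) mulr0z subr0 => /eqP.
rewrite mulf_eq0 => /orP [/eqP //|].
by rewrite intr_eq0.
Qed.
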